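(* For all relatively prime integers $p \geq 1$ and $q$, one has $\Delta(p,q) \leq p/4$, where $\Delta(p,q) = \max \mathcal{D}(L(p,q)) - \min \mathcal{D}(L(p,q))$.
   Context: $L(p,q)$ denotes the lens space obtained by $p/q$ Dehn surgery on the unknot in $S^3$. For a rational homology sphere $Y$, $\mathcal{D}(Y)$ denotes the multiset of Heegaard Floer correction terms $d(Y,\mathfrak{s})$, $\mathfrak{s} \in \mathrm{Spin}^c(Y)$, so $\Delta(p,q)$ is the range (maximum minus minimum) of the correction terms of $L(p,q)$. *)

(* Defs.v *)
From HB Require Import structures.
From mathcomp Require Import all_boot all_order all_algebra.
Set Implicit Arguments. Unset Strict Implicit. Unset Printing Implicit Defensive.
Import Order.TTheory GRing.Theory Num.Theory.
Local Open Scope ring_scope.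

(* Heegaard Floer correction terms of lens spaces, via the
   Ozsvath--Szabo recursion (Absolutely graded Floer homologies, Prop. 4.8):
     d(L(p,q), i) = -1/4 + (2i+1-p-q)^2/(4pq) - d(L(q,r), j),
   for p > q > 0 coprime, r = p mod q, j = i mod q, 0 <= i < p,
   with d(L(1,0), 0) = d(S^3) = 0.  Spin^c structures are labelled by
   i in {0,...,p-1}.  [fuel] bounds the recursion depth (fuel = p suffices,
   since q < p decreases strictly). *)
Fixpoint lens_d_aux (fuel p q i : nat) : rat :=
  match fuel with
  | 0%N => 0
  | fuel'.+1 =>
      if q == 0%N then 0 else
      let x : int := (2 * i + 1)%:Z - p%:Z - q%:Z in
      - (1 / 4) + (x ^+ 2)%:~R / (4 * (p * q)%:R)
        - lens_d_aux fuel' q (p %% q) (i %% q)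
  end.

Definition lens_q (p : nat) (q : int) : nat := absz (q %% p%:Z)%Z.

Definition lens_d (p : nat) (q : int) (i : nat) : rat :=
  lens_d_aux p p (lens_q p q) i.

Definition lens_D (p : nat) (q : int) : seq rat :=
  [seq lens_d p q i | i <- iota 0 p].

Definition lens_Delta (p : nat) (q : int) : rat :=
  let s := lens_D p q in
  \big[Num.max/head 0 s]_(x <- s) x - \big[Num.min/head 0 s]_(x <- s) x.

(* Main.v *)
Require Import Defs.
From mathcomp Require Import all_boot all_order all_algebra.
From mathcomp Require Import ring lra zify.
Import Order.TTheory GRing.Theory Num.Theory.
Local Open Scope ring_scope.

Notation A := lens_d_aux.
Definition X (p q i : nat) : rat := ((2*i+1)%:R - p%:R - q%:R)^+2.

Lemma aux0 n p i : A n p 0 i = 0. Proof. by case: n. Qed.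

Lemma auxS n p q i : (0 < q)%N ->
  A n.+1 p q i = -(1/4) + X p q i / (4 * (p%:R * q%:R)) - A n q (p %% q) (i %% q).
Proof.
case: q => // q _; rewrite /= /X natrM; congr (_ + _ / _ - _).
rewrite rmorphXn /= !rmorphB /=. by rewrite !pmulrn.
Qed.

Lemma fin (P M S S' T Tb : rat) : 0 < P -> 0 < M -> 0 <= S' -> S <= (P+M-1)^+2 -> T <= Tb ->
  (P+M-1)^+2 + 4*P*M*Tb <= P^+2*M -> (S - S') / (4*(P*M)) + T <= P/4.
Proof.
move=> P0 M0 S'0 SB TB H.
have K0 : 0 < 4*(P*M) by rewrite mulr_gt0 // mulr_gt0.
set K := 4*(P*M) in K0 *.
have w0 : 0 < K^-1 by rewrite invr_gt0.
have wK : K * K^-1 = 1 by rewrite mulfV // gt_eqF.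
have h1 : (S - S' - (P+M-1)^+2) * K^-1 <= 0.
  by rewrite pmulr_lle0 //; lra.
have h2 : (P+M-1)^+2 * K^-1 <= (P^+2*M - 4*P*M*Tb) * K^-1.
  by rewrite ler_pM2r //; lra.
have h3 : (P^+2*M - 4*P*M*Tb) * K^-1 = (P/4 - Tb) * (K * K^-1).
  by rewrite /K; field; rewrite ?mulf_neq0 ?gt_eqF.
rewrite wK mulr1 in h3.
rewrite mulrDl mulNr in h1.
lra.
Qed.

Lemma ineq (P M : rat) : 3 <= M -> 2*M+1 <= P -> (P+M-1)^+2 <= P*M*(P-M).
Proof.
move=> hM hP.
have [a a0 eM] : exists2 a, 0 <= a & M = a + 3 by exists (M-3); [lra|ring].
rewrite eM in hP *.
have [b b0 ->] : exists2 b, 0 <= b & P = 2*a+7+b by exists (P-2*a-7); [lra|ring].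
have ab := mulr_ge0 a0 b0. have aa := mulr_ge0 a0 a0. have bb := mulr_ge0 b0 b0.
have := mulr_ge0 aa a0. have := mulr_ge0 aa b0. have := mulr_ge0 a0 bb. have := mulr_ge0 bb b0.
nra.
Qed.
Lemma ineq2 (P : rat) : 7 <= P -> (P+2-1)^+2 <= P*2*(P-2).
Proof. move=> *; nra. Qed.

Lemma ltR (i p : nat) : (i < p)%N -> (i%:R + 1 <= p%:R :> rat).
Proof. by move=> h; rewrite natr1 ler_nat. Qed.

Lemma natR0 (i : nat) : 0 <= i%:R :> rat. Proof. exact: ler0n. Qed.

Lemma Xge0 p q i : 0 <= X p q i. Proof. exact: sqr_ge0. Qed.

Lemma Xbound p q i : (i < p)%N -> X p q i <= (p%:R + q%:R - 1)^+2.
Proof.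
move=> /ltR h; rewrite /X natrD natrM.
have := natR0 i; have := natR0 q.
set I := i%:R; set P := p%:R; set Q := q%:R => h1 h2.
have e1 : 0 <= 2*P+2*Q-2-2*I by lra.
have e2 : 0 <= 2*I by lra.
have := mulr_ge0 e1 e2. nra.
Qed.

Lemma exc1 n i : (5 <= n)%N -> (i < 5)%N -> -(2/5) <= A n 5 2 i <= 2/5.
Proof.
case: n => [|[|[|n]]] // _.
rewrite auxS // auxS // aux0 /X !modn2.
case: i => [|[|[|[|[|i]]]]] // _; rewrite ![odd _]/= ![(2 * _ + 1)%N]/=; apply/andP; split; lra.
Qed.

Lemma exc2 n i : (5 <= n)%N -> (i < 5)%N -> -(2/5) <= A n 5 3 i <= 2/5.
Proof.
case: n => [|[|[|[|n]]]] // _.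
rewrite auxS // -[(5 %% 3)%N]/2%N auxS // -[(3 %% 2)%N]/1%N auxS // aux0 /X.
case: i => [|[|[|[|[|i]]]]] // _; rewrite ![(_ %% _)%N]/= ![(2 * _ + 1)%N]/=; apply/andP; split; lra.
Qed.

Lemma idB1 (I Q R : rat) : Q != 0 -> R != 0 -> Q + R != 0 ->
  (I + (I + 0) + 1 - (Q + R) - Q) ^+ 2 / (4 * ((Q + R) * Q)) -
  (I + (I + 0) + 1 - Q - R) ^+ 2 / (4 * (Q * R)) =
  1 / 4 - (2 * I + 1 - Q) ^+ 2 / (4 * ((Q + R) * R)).
Proof. by move=> hQ hR hQR; field; rewrite hQ hR hQR. Qed.

Lemma idB2 (J Q R : rat) : Q != 0 -> R != 0 -> Q + R != 0 ->
  (J + Q + (J + Q + 0) + 1 - (Q + R) - Q) ^+ 2 / (4 * ((Q + R) * Q)) -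
  (J + (J + 0) + 1 - Q - R) ^+ 2 / (4 * (Q * R)) =
  1 / 4 - (2 * J + 1 - Q - 2 * R) ^+ 2 / (4 * ((Q + R) * R)).
Proof. by move=> hQ hR hQR; field; rewrite hQ hR hQR. Qed.

Lemma caseB q r i : (0 < r)%N -> (r < q)%N -> (i < q + r)%N ->
  exists2 Z : rat, 0 <= Z <= ((q+r)%:R + r%:R - 1)^+2 &
  X (q+r) q i / (4*((q+r)%:R*q%:R)) - X q r (i %% q) / (4*(q%:R*r%:R))
    = 1/4 - Z/(4*((q+r)%:R*r%:R)).
Proof.
move=> r0 rq ip.
have Q0 : 0 < q%:R :> rat by rewrite ltr0n (ltn_trans r0 rq).
have R0 : 0 < r%:R :> rat by rewrite ltr0n.
case: (ltnP i q) => iq.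
  rewrite modn_small // /X !natrD ?natrM.
  have := ltR _ _ iq; have := natR0 i.
  set I := i%:R; set Q := q%:R; set R := r%:R => h1 h2.
  exists ((2*I+1-Q)^+2).
    apply/andP; split; first exact: sqr_ge0.
    have e1 : 0 <= (Q+R+R-1) - (2*I+1-Q) by lra.
    have e2 : 0 <= (Q+R+R-1) + (2*I+1-Q) by lra.
    have := mulr_ge0 e1 e2; nra.
  apply: idB1; rewrite ?gt_eqF //; lra.
have [j ei] : exists j, i = (j + q)%N by exists (i - q)%N; rewrite subnK.
subst i.
rewrite modnDr modn_small; last by lia.
have jr : (j < r)%N by lia.
rewrite /X !natrD ?natrM.
have := ltR _ _ jr; have := natR0 j.
set J := j%:R; set Q := q%:R; set R := r%:R => h1 h2.
exists ((2*J+1-Q-2*R)^+2).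
  apply/andP; split; first exact: sqr_ge0.
  have e1 : 0 <= (Q+R+R-1) - (2*J+1-Q-2*R) by lra.
  have e2 : 0 <= (Q+R+R-1) + (2*J+1-Q-2*R) by lra.
  have := mulr_ge0 e1 e2; nra.
apply: idB2; rewrite ?gt_eqF //; lra.
Qed.

Lemma natle (a b : nat) : (a <= b)%N -> a%:R <= b%:R :> rat.
Proof. by rewrite ler_nat. Qed.

Lemma rearrA (a b K g g' : rat) :
  (-(1/4) + a/K - g) - (-(1/4) + b/K - g') = (a - b)/K + (g' - g).
Proof. rewrite mulrBl; ring. Qed.

Lemma rearrB (a b c d h h' Z Z' K : rat) : a - c = 1/4 - Z/K -> b - d = 1/4 - Z'/K ->
  (-(1/4) + a - (-(1/4) + c - h)) - (-(1/4) + b - (-(1/4) + d - h')) = (Z' - Z)/K + (h - h').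
Proof. move=> e1 e2; rewrite mulrBl; lra. Qed.

Lemma coprime_nn q : (2 <= q)%N -> ~~ coprime q q.
Proof. by move=> h; rewrite /coprime gcdnn; case: q h => [|[|]]. Qed.


Lemma odd5 q : odd q -> (2 < q)%N -> q <> 3%N -> (7 <= q + 2)%N.
Proof. by case: q => [|[|[|[|[|q]]]]] //= _ _ h; lia. Qed.

Local Opaque lens_d_aux.

Lemma main n : forall p q, (p <= n)%N -> (q < p)%N -> coprime p q ->
  forall i i', (i < p)%N -> (i' < p)%N -> A n p q i - A n p q i' <= p%:R / 4.
Proof.
elim/ltn_ind: n => n IH p q pn qp cop i i' ip ip'.
have P0 : 0 < p%:R :> rat by rewrite ltr0n (leq_ltn_trans (leq0n q) qp).
case: (posnP q) => [q0|qpos].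
  by rewrite q0 !aux0 subrr divr_ge0 // ler0n.
case: (boolP ((p == 5) && ((q == 2) || (q == 3))))%N => [/andP[/eqP ep /orP[/eqP eq|/eqP eq]]|hne].
{ subst p q.
  have /andP[h1 h2] := exc1 n i pn ip; have /andP[h3 h4] := exc1 n i' pn ip'; lra. }
{ subst p q.
  have /andP[h1 h2] := exc2 n i pn ip; have /andP[h3 h4] := exc2 n i' pn ip'; lra. }
have Q0 : 0 < q%:R :> rat by rewrite ltr0n.
case: n IH pn => [|n] IH pn; first by lia.
case: (leqP (2*q) p) => hq.
{ rewrite !(auxS _ _ _ _ qpos) rearrA.
  case: (q =P 1%N) => [q1|qn1].
  { subst q; rewrite modn1 !aux0 subrr.
    by apply: (fin _ _ _ _ _ 0) => //; [exact: Xge0 | exact: Xbound | nra]. }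
  have q2 : (2 <= q)%N by lia.
  apply: (fin _ _ _ _ _ (q%:R/4)) => //; [exact: Xge0 | exact: Xbound | | ].
  { apply: IH; rewrite ?ltn_pmod //; first lia.
    by rewrite coprime_modr coprime_sym. }
  have pn2 : p <> (2*q)%N.
  { move=> ep; move: cop; rewrite ep coprimeMl => /andP[_].
    by move/negP: (coprime_nn _ q2). }
  case: (q =P 2%N) => [eq2|qn2].
  { subst q.
    have p7 : (7 <= p)%N.
    { move: cop hne hq pn2; rewrite coprimen2.
      by case: p {ip ip' pn qp P0} => [|[|[|[|[|[|[|p]]]]]]]. }
    have h := natle _ _ p7.
    have := ineq2 (p%:R) h; nra. }
  have hP := natle (2*q+1) p ltac:(lia). have hQ := natle 3 q ltac:(lia).
  rewrite !natrD in hP.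
  have := ineq (p%:R) (q%:R) hQ ltac:(lra); nra. }
have [r er] : exists r, p = (q + r)%N by exists (p - q)%N; rewrite subnKC // ltnW.
subst p.
have r0 : (0 < r)%N by lia.
have rq : (r < q)%N by lia.
have em : ((q + r) %% q = r)%N by rewrite modnDl modn_small.
have cqr : coprime r q by rewrite -em coprime_modl.
case: n IH pn => [|n] IH pn; first by lia.
rewrite !(auxS _ _ _ _ qpos) em !(auxS _ _ _ _ r0).
have [Z hZ eZ] := caseB q r i r0 rq ip.
have [Z' hZ' eZ'] := caseB q r i' r0 rq ip'.
rewrite (rearrB _ _ _ _ _ _ _ _ _ eZ eZ').
have R0 : 0 < r%:R :> rat by rewrite ltr0n.
case/andP: hZ => hZ0 hZ1; case/andP: hZ' => hZ0' hZ1'.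
case: (r =P 1%N) => [r1|rn1].
{ subst r; rewrite modn1 !aux0 subrr.
  by apply: (fin _ _ _ _ _ 0) => //; nra. }
have r2 : (2 <= r)%N by lia.
apply: (fin _ _ _ _ _ (r%:R/4)) => //.
{ apply: IH; rewrite ?ltn_pmod //; first lia.
  by rewrite coprime_modr. }
case: (r =P 2%N) => [eq2|rn2].
{ subst r.
  have p7 : (7 <= q + 2)%N.
  { apply: (odd5 q); first by rewrite -coprime2n.
      by []. by move=> e; move: hne; rewrite e. }
  have h := natle _ _ p7.
  have := ineq2 _ h; nra. }
have hP := natle (2*r+1) (q+r) ltac:(lia). have hQ := natle 3 r ltac:(lia).
rewrite !natrD in hP.
have := ineq ((q+r)%:R) (r%:R) hQ ltac:(rewrite natrD; lra); nra.
Qed.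

Lemma big_in (op : rat -> rat -> rat) (x0 : rat) (t : seq rat) :
  (forall a b, op a b = a \/ op a b = b) -> \big[op/x0]_(x <- t) x \in x0 :: t.
Proof.
move=> hop; elim: t => [|y t IH]; first by rewrite big_nil mem_head.
rewrite big_cons; case: (hop y (\big[op/x0]_(x <- t) x)) => ->.
  by rewrite !inE eqxx orbT.
by move: IH; rewrite !inE => /orP[->|->]; rewrite ?orbT.
Qed.

Lemma maxE2 (a b : rat) : Num.max a b = a \/ Num.max a b = b.
Proof. rewrite /Num.max /Num.Def.maxr; case: ifP => _; auto. Qed.
Lemma minE2 (a b : rat) : Num.min a b = a \/ Num.min a b = b.
Proof. rewrite /Num.min /Num.Def.minr; case: ifP => _; auto. Qed.

Lemma lensq_prop p q : (1 <= p)%N -> coprimez p%:Z q ->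
  (lens_q p q < p)%N /\ coprime p (lens_q p q).
Proof.
move=> p1 cop.
have pz : p%:Z != 0 by case: p p1 {cop}.
have := modz_ge0 q pz; have := ltz_pmod q (_ : 0 < p%:Z) ; rewrite ?ltz_nat //.
move: cop; rewrite /coprimez -gcdz_modr /lens_q.
case: (q %% p)%Z => // m; rewrite /gcdz /= => /eqP [] cm hm _.
by split; [rewrite -ltz_nat; exact: hm | rewrite /coprime cm].
Qed.

Theorem lemma3p1 (p : nat) (q : int) :
  (1 <= p)%N -> coprimez p%:Z q ->
  lens_Delta p q <= p%:R / 4.
Proof.
move=> p1 cop; have [ql cq] := lensq_prop _ _ p1 cop.
have mem : forall x, x \in head 0 (lens_D p q) :: lens_D p q ->
   exists2 i, (i < p)%N & x = lens_d p q i.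
  move=> x; rewrite /lens_D; case: p p1 {ql cq cop} => // p _ /=.
  rewrite !inE => /orP[/eqP ->|/orP[/eqP ->|]]; try by exists 0%N.
  by move/mapP=> [i]; rewrite mem_iota => /andP[_ hi] ->; exists i; rewrite // -add1n.
rewrite /lens_Delta.
have [i ip ->] := mem _ (big_in _ _ (lens_D p q) maxE2).
have [i' ip' ->] := mem _ (big_in _ _ (lens_D p q) minE2).
exact: main.
Qed.
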